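(* Let $A,B,C,D\in\mathsf{W}_\omega$ be such that $|A|=|B|$ and, for every position $i$, the $i$-th symbol of $A$ is $\le$ the $i$-th symbol of $B$. Then $A\precsim DBC$. Moreover, if either $C\neq\Lambda$ or the last symbols of $A$ and $B$ are different, then $A\prec DBC$.
   Context: Words are finite strings over $\mathbb{N}$; $\mathsf{W}_\omega$ is the set of all words, $\Lambda$ the empty word, juxtaposition denotes concatenation, $|A|$ is length. For $k\in\mathbb{N}$, $\mathsf{S}_k$ is the set of words all of whose symbols are $\ge k$. Given a linear preorder $\precsim$ with $A\sim B$ iff $A\precsim B\wedge B\precsim A$ and $A\prec B$ iff $A\precsim B\wedge\neg B\precsim A$, a finite sequence $(A_1,\dots,A_p)$ is lexicographically not greater than $(B_1,\dots,B_q)$ iff either $p\le q$ and $A_i\sim B_i$ for all $i\le p$, or there is $s<\min(p,q)$ with $A_i\sim B_i$ for $i\le s$ and $A_{s+1}\prec B_{s+1}$. A lexicographically maximal subsequence of a finite sequence is a subsequence that is lexicographically not less than every subsequence. The linear preorder $\precsim$ on $\mathsf{W}_\omega$ is defined by recursion on (largest symbol of $AB$) $-$ (smallest symbol of $AB$): $\Lambda\precsim\Lambda$; if $AB$ is nonempty with minimal symbol $n$, write uniquely $A=A_1n\cdots nA_k$, $B=B_1n\cdots nB_l$ ($k,l\ge1$) with $A_i,B_j\in\mathsf{S}_{n+1}$ (possibly empty); let $C,D$ be lexicographically maximal subsequences of $(A_1,\dots,A_k)$, $(B_1,\dots,B_l)$; then $A\precsim B$ iff $C$ is lexicographically not greater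 than $D$. *)

(* Defs.v *)
From mathcomp Require Import all_boot.
Set Implicit Arguments. Unset Strict Implicit. Unset Printing Implicit Defensive.

Definition word := seq nat.

(* smallest / largest symbol of a nonempty word (0 for the empty word) *)
Definition wmin (w : word) : nat := foldr minn (head 0 w) w.
Definition wmax (w : word) : nat := foldr maxn 0 w.

(* [blocks n A] = (A_1, ..., A_k) where A = A_1 n A_2 n ... n A_k *)
Fixpoint blocks (n : nat) (A : word) : seq word :=
  match A with
  | [::] => [:: [::]]
  | x :: s =>
      let r := blocks n s in
      if x == n then [::] :: r
      else match r with
           | [::] => [:: [:: x]]
           | b :: bs => (x :: b) :: bs
           end
  end.

Fixpoint subseqs (T : Type) (s : seq T) : seq (seq T) :=
  match s with
  | [::] => [:: [::]]
  | x :: s' => let r := subseqs s' in map (cons x) r ++ r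
  end.

Section Lex.
Variable T : eqType.
Variable le : T -> T -> bool.   (* a (linear) preorder *)
Variable x0 : T.                 (* default value, never used meaningfully *)

Definition psim (a b : T) : bool := le a b && le b a.
Definition plt (a b : T) : bool := le a b && ~~ le b a.

Definition lexle (As Bs : seq T) : bool :=
  let p := size As in let q := size Bs in
  ((p <= q) && all (fun i => psim (nth x0 As i) (nth x0 Bs i)) (iota 0 p))
  || has (fun s =>
        all (fun i => psim (nth x0 As i) (nth x0 Bs i)) (iota 0 s)
        && plt (nth x0 As s) (nth x0 Bs s))
      (iota 0 (minn p q)).

Definition lexmax (S C : seq T) : bool :=
  (C \in subseqs S) && all (fun E => lexle E C) (subseqs S).
End Lex.

(* The recursive definition of the preorder, with fuel bounding
   (largest symbol - smallest symbol) of AB. *)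
Fixpoint wle (f : nat) (A B : word) : bool :=
  if A ++ B is [::] then true else
  match f with
  | 0 => true (* never reached with sufficient fuel *)
  | f'.+1 =>
      let n := wmin (A ++ B) in
      let As := blocks n A in
      let Bs := blocks n B in
      let le := wle f' in
      has (fun C => lexmax le [::] As C &&
             has (fun D => lexmax le [::] Bs D && lexle le [::] C D)
                 (subseqs Bs))
          (subseqs As)
  end.

Definition precsim (A B : word) : bool :=
  wle (wmax (A ++ B) - wmin (A ++ B)).+1 A B.

Definition prec (A B : word) : bool := precsim A B && ~~ precsim B A.

Example ex1 : precsim [:: 1] [:: 0] = false. Proof. by []. Qed.
Example ex2 : precsim [:: 0] [:: 1] = true. Proof. by []. Qed.
Example ex3 : prec [::] [:: 0]. Proof. by []. Qed.

(* Main.v *)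
Require Import Defs.
From mathcomp Require Import all_boot.
Set Implicit Arguments. Unset Strict Implicit. Unset Printing Implicit Defensive.

Lemma iotaS m n : iota m.+1 n = map succn (iota m n).
Proof. by elim: n m => [|n IH] m //=; rewrite IH. Qed.

Section Lexs.
Variable T : eqType.
Implicit Types s t u : seq T.

Fixpoint lexs (le : rel T) s t :=
  match s, t with
  | [::], _ => true
  | _ :: _, [::] => false
  | a :: s', b :: t' => plt le a b || psim le a b && lexs le s' t'
  end.

Lemma lexleE le x0 s t : lexle le x0 s t = lexs le s t.
Proof.
elim: s t => [|a s IH] [|b t] //=.
rewrite -IH /lexle /= ltnS minnSS /= !iotaS all_map has_map /=.
rewrite (@eq_has _ _ (fun i => psim le a b && (all (fun i0 => psim le (nth x0 s i0) (nth x0 t i0)) (iota 0 i) && plt le (nth x0 s i) (nth x0 t i)))); last first.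
  by move=> i /=; rewrite iotaS all_map -andbA.
rewrite /preim /=.
case: (psim le a b) => /=; last by rewrite (@eq_has _ _ pred0) // has_pred0 !orbF andbF.
by rewrite orbCA.
Qed.
End Lexs.

From mathcomp Require Import zify.

Section Subseqs.
Variable T : eqType.
Lemma nil_subseqs (s : seq T) : [::] \in subseqs s.
Proof. by elim: s => [|x s IH] //=; rewrite mem_cat IH orbT. Qed.

Lemma subseqs_sub (s c : seq T) : c \in subseqs s -> {subset c <= s}.
Proof.
elim: s c => [|x s IH] c /=; first by rewrite inE => /eqP ->.
rewrite mem_cat => /orP [/mapP [c' Hc' ->] | Hc] y.
- rewrite inE => /orP [/eqP ->|/(IH _ Hc') ys]; first exact: mem_head.
  by rewrite inE ys orbT.
- by move/(IH _ Hc) => ys; rewrite inE ys orbT.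
Qed.

Lemma lexs_eq (le1 le2 : rel T) (U : seq T) s t :
  {subset s <= U} -> {subset t <= U} ->
  (forall a b, a \in U -> b \in U -> le1 a b = le2 a b) ->
  lexs le1 s t = lexs le2 s t.
Proof.
move=> + + e; elim: s t => [|a s IH] [|b t] //= sU tU.
have aU : a \in U by apply sU; rewrite inE eqxx.
have bU : b \in U by apply tU; rewrite inE eqxx.
rewrite /plt /psim !e // IH // => z zs; [apply sU | apply tU]; by rewrite inE zs orbT.
Qed.
End Subseqs.

Lemma leq_foldr_minn d s x : x \in d :: s -> foldr minn d s <= x.
Proof.
elim: s => [|a s IH] /=; first by rewrite inE => /eqP ->.
rewrite !inE => /orP [xd|/orP [/eqP ->|xs]].
- have := IH; rewrite inE xd => /(_ isT); lia.
- lia.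
- have := IH; rewrite inE xs orbT => /(_ isT); lia.
Qed.

Lemma foldr_minn_mem d s : foldr minn d s \in d :: s.
Proof.
elim: s => [|a s IH] /=; first by rewrite inE.
rewrite /minn; case: ifP => _; first by rewrite !inE eqxx orbT.
by move: IH; rewrite !inE => /orP [->|->]; rewrite ?orbT.
Qed.

Lemma wmin_le w x : x \in w -> wmin w <= x.
Proof.
case: w => [|a s] //= xin; rewrite /wmin /=.
have := leq_foldr_minn xin; lia.
Qed.

Lemma wmin_mem w : w != [::] -> wmin w \in w.
Proof.
case: w => [|a s] //= _; rewrite /wmin /= /minn; case: ifP => _.
  by rewrite mem_head.
exact: foldr_minn_mem.
Qed.

Lemma wmax_ge w x : x \in w -> x <= wmax w.
Proof.
elim: w => [|a s IH] //=; rewrite inE => /orP [/eqP ->|/IH]; rewrite /wmax /=; lia.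
Qed.

Lemma wmax_lt w hi : all (fun x => x < hi) w -> 0 < hi -> wmax w < hi.
Proof.
elim: w => [|a s IH] //= /andP [ha hs] h0; have := IH hs h0; rewrite /wmax /=; lia.
Qed.

Lemma blocks_ne n W : blocks n W != [::].
Proof.
elim: W => [|x s IH] //=; case: ifP => // _.
by case: (blocks n s) IH.
Qed.

Lemma blocks_pre n U W : n \notin U ->
  blocks n (U ++ W) = (U ++ head [::] (blocks n W)) :: behead (blocks n W).
Proof.
elim: U => [|x U IH] /=.
  by move=> _; case: (blocks n W) (blocks_ne n W).
rewrite inE negb_or eq_sym => /andP [/negbTE -> /IH ->] //.
Qed.

Lemma blocks_sep n U W : n \notin U -> blocks n (U ++ n :: W) = U :: blocks n W.
Proof. by move/(blocks_pre (n :: W)) => ->; rewrite /= eqxx /= cats0. Qed.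

Lemma blocks_notin n W : n \notin W -> blocks n W = [:: W].
Proof. by move=> h; have := blocks_pre [::] h; rewrite !cats0 => ->. Qed.

Lemma bl_cat n D W : exists Ds dl, [/\ blocks n D = rcons Ds dl, n \notin dl &
  blocks n (D ++ W) = Ds ++ blocks n (dl ++ W)].
Proof.
elim: D => [|x D [Ds [dl [e1 e2 e3]]]]; first by exists [::], [::].
rewrite /= e1 e3; case: ifP => [/eqP xn|xn].
  by exists ([::] :: Ds), dl; split.
case: Ds e1 e3 => [|d Ds] e1 e3 /=.
  exists [::], (x :: dl); split => //; first by rewrite inE negb_or eq_sym xn.
  by rewrite /= xn; case: (blocks n (dl ++ W)) (blocks_ne n (dl ++ W)).
by exists ((x :: d) :: Ds), dl.
Qed.

Lemma blocks_sub n W X : X \in blocks n W -> all (fun x => (x \in W) && (x != n)) X.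
Proof.
elim: W X => [|y W IH] X /=; first by rewrite inE => /eqP ->.
have sub : forall Z, all (fun x => (x \in W) && (x != n)) Z ->
    all (fun x => (x \in y :: W) && (x != n)) Z.
  move=> Z; apply: sub_all => z /andP [zW ->]; by rewrite inE zW orbT.
case: ifP => [/eqP yn|yn].
  by rewrite inE => /orP [/eqP -> //| /IH /sub].
case E: (blocks n W) (blocks_ne n W) IH => [|b bs] // _ IH.
rewrite inE => /orP [/eqP -> /=|xb].
  rewrite mem_head yn /=; apply: sub; apply: IH; exact: mem_head.
by apply: sub; apply: IH; rewrite inE xb orbT.
Qed.

Lemma blocks_nil1 n C : blocks n C = [:: [::]] -> C = [::].
Proof.
case: C => [|x C] //=; case: ifP => _; first by case: (blocks n C) (blocks_ne n C).
by case: (blocks n C).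
Qed.

Definition Ex (le : rel word) n A B :=
  has (fun C => lexmax le [::] (blocks n A) C &&
     has (fun D => lexmax le [::] (blocks n B) D && lexle le [::] C D)
         (subseqs (blocks n B)))
    (subseqs (blocks n A)).

Lemma Ex_eq le1 le2 n A B :
  (forall X Y, X \in blocks n A ++ blocks n B -> Y \in blocks n A ++ blocks n B ->
     le1 X Y = le2 X Y) -> Ex le1 n A B = Ex le2 n A B.
Proof.
move=> e; rewrite /Ex /lexmax.
set U := blocks n A ++ blocks n B.
have lx : forall S c d, {subset S <= U} -> c \in subseqs S -> d \in subseqs S ->
    lexle le1 [::] d c = lexle le2 [::] d c.
  move=> S c d SU cS dS; rewrite !lexleE; apply: (lexs_eq (U := U)) => //.
  - by move=> z /(subseqs_sub dS) /SU.
  - by move=> z /(subseqs_sub cS) /SU.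
have SA : {subset blocks n A <= U} by move=> z zA; rewrite mem_cat zA.
have SB : {subset blocks n B <= U} by move=> z zA; rewrite mem_cat zA orbT.
apply: eq_in_has => c cA; rewrite cA /=.
rewrite (@eq_in_all _ _ (fun E => lexle le2 [::] E c)); last first.
  by move=> d dA; exact: (lx _ _ _ SA cA dA).
congr andb; apply: eq_in_has => d dB; rewrite dB /=.
rewrite (@eq_in_all _ _ (fun E => lexle le2 [::] E d)); last first.
  by move=> e' eB; exact: (lx _ _ _ SB dB eB).
congr andb; rewrite !lexleE; apply: (lexs_eq (U := U)) => //.
- by move=> z /(subseqs_sub cA) /SA.
- by move=> z /(subseqs_sub dB) /SB.
Qed.

Lemma wleS f A B : A ++ B != [::] -> wle f.+1 A B = Ex (wle f) (wmin (A ++ B)) A B.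
Proof. by rewrite /=; case: (A ++ B). Qed.

Lemma wle_nil f A B : A ++ B = [::] -> wle f A B.
Proof. by case: f => [|f] /=; case: (A ++ B). Qed.

Definition wb lo hi (w : word) := all (fun x => lo <= x < hi) w.

Lemma wb_empty lo hi w : hi - lo <= 0 -> wb lo hi w -> w = [::].
Proof. case: w => //= x w h /andP [hx _]; lia. Qed.

Lemma wb_cat lo hi u v : wb lo hi (u ++ v) = wb lo hi u && wb lo hi v.
Proof. exact: all_cat. Qed.

Lemma wb_sub lo hi u v : {subset u <= v} -> wb lo hi v -> wb lo hi u.
Proof. by move=> s /allP h; apply/allP => x /s /h. Qed.

Lemma wb_weak lo lo' hi hi' w : lo <= lo' -> hi' <= hi -> wb lo' hi' w -> wb lo hi w.
Proof. move=> h1 h2; apply: sub_all => x; lia. Qed.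

Lemma blk_wb lo hi n A B X : wb lo hi (A ++ B) -> all (fun x => n <= x) (A ++ B) ->
  X \in blocks n A ++ blocks n B -> wb n.+1 hi X.
Proof.
move=> hw hn; rewrite mem_cat => hX.
have hX' : all (fun x => (x \in A ++ B) && (x != n)) X.
  case/orP: hX => /blocks_sub; apply: sub_all => x /andP [xi ->];
  by rewrite mem_cat xi ?orbT.
apply/allP => x /(allP hX') /andP [xi /eqP xn].
have := allP hw x xi; have := allP hn x xi; lia.
Qed.

Lemma wmin_ge lo hi w : w != [::] -> wb lo hi w -> lo <= wmin w.
Proof. by move=> ne /allP h; have /andP [] := h _ (wmin_mem ne). Qed.

Lemma all_wmin w : all (fun x => wmin w <= x) w.
Proof. by apply/allP => x; exact: wmin_le. Qed.

Lemma wle_fuel k : forall f g lo hi A B, hi - lo <= k -> wb lo hi (A ++ B) ->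
  k <= f -> k <= g -> wle f A B = wle g A B.
Proof.
elim: k => [|k IH] f g lo hi A B hk hw hf hg.
  by rewrite !wle_nil // (wb_empty hk hw).
have [E|NE] := eqVneq (A ++ B) [::]; first by rewrite !wle_nil.
case: f hf => [|f] hf //; case: g hg => [|g] hg //.
rewrite !wleS //; apply: Ex_eq => X Y HX HY.
have nlo := wmin_ge NE hw.
apply: (IH f g (wmin (A ++ B)).+1 hi) => //; try lia.
by rewrite wb_cat (blk_wb hw (all_wmin _) HX) (blk_wb hw (all_wmin _) HY).
Qed.

Lemma precsim_wle lo hi f A B : wb lo hi (A ++ B) -> hi - lo <= f ->
  wle f A B = precsim A B.
Proof.
move=> hw hf; have [E|NE] := eqVneq (A ++ B) [::]; first by rewrite /precsim !wle_nil.
have nlo := wmin_ge NE hw.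
have mx : wmax (A ++ B) < hi.
  apply: wmax_lt; last by have := wmin_mem NE; move/(allP hw)/andP => [_]; lia.
  by apply: sub_all hw => x /andP [].
have mn : wmin (A ++ B) <= wmax (A ++ B) by apply: wmax_ge; apply: wmin_mem.
rewrite /precsim; apply: (wle_fuel (k := (wmax (A ++ B)).+1 - wmin (A ++ B))
   (lo := wmin (A ++ B)) (hi := (wmax (A ++ B)).+1)) => //; try lia.
apply/allP => x xi; rewrite wmin_le //=; have := wmax_ge xi; lia.
Qed.

Lemma precsim_unfold A B : A ++ B != [::] ->
  precsim A B = Ex precsim (wmin (A ++ B)) A B.
Proof.
move=> NE; rewrite {1}/precsim.
have mn : wmin (A ++ B) <= wmax (A ++ B) by apply: wmax_ge; apply: wmin_mem.
rewrite wleS //; apply: Ex_eq => X Y HX HY.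
apply: (precsim_wle (lo := (wmin (A ++ B)).+1) (hi := (wmax (A ++ B)).+1)); last by rewrite subSS.
have hw : wb (wmin (A ++ B)) (wmax (A ++ B)).+1 (A ++ B).
  by apply/allP => x xi; rewrite wmin_le //= ltnS wmax_ge.
by rewrite wb_cat (blk_wb hw (all_wmin _) HX) (blk_wb hw (all_wmin _) HY).
Qed.

Section Gen.
Variable T : eqType.
Variable le : rel T.
Variable P : pred T.
Hypothesis tot : forall a b, P a -> P b -> le a b || le b a.
Hypothesis tr : forall a b c, P a -> P b -> P c -> le a b -> le b c -> le a c.

Lemma le_refl a : P a -> le a a.
Proof. by move=> pa; have := tot pa pa; rewrite orbb. Qed.

Fixpoint smax (s : seq T) : seq T :=
  if s is x :: s' then (if all (fun y => le y x) s' then x :: smax s' else smax s')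
  else [::].

Lemma smax_cons x s :
  smax (x :: s) = if all (fun y => le y x) s then x :: smax s else smax s.
Proof. by []. Qed.

Lemma smax_sub s : {subset smax s <= s}.
Proof.
elim: s => [|x s IH] //= y; case: ifP => _; rewrite ?inE.
  by case/orP => [->|/IH ->]; rewrite ?orbT.
by move/IH ->; rewrite orbT.
Qed.

Lemma smax_nil s : (smax s == [::]) = (s == [::]).
Proof.
elim: s => [|x s IH] //=; case: ifP => //.
by case: s IH => [|y s'] //= IH _; rewrite IH.
Qed.

Lemma smax_subseqs s : smax s \in subseqs s.
Proof.
elim: s => [|x s IH] /=; first by rewrite inE.
by case: ifP => _; rewrite mem_cat ?(map_f (cons x) IH) // IH orbT.
Qed.

Lemma all_smax s : all P s -> all P (smax s).
Proof. by move=> /allP h; apply/allP => x /smax_sub /h. Qed.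

Lemma smax_head_mem x0 s : s != [::] -> head x0 (smax s) \in s.
Proof.
move=> ne; apply: smax_sub; case E: (smax s) => [|a l] /=; last exact: mem_head.
by move/eqP: E; rewrite smax_nil (negbTE ne).
Qed.

Lemma smax_head x0 s : s != [::] -> all P s ->
  all (fun y => le y (head x0 (smax s))) s.
Proof.
elim: s => [|x s IH] //= _ /andP [px ps].
case: ifP => [hall|hnall] /=; first by rewrite le_refl.
case: s IH hnall ps => [|y s'] // IH hnall ps.
have H := IH isT ps; rewrite H andbT.
set h := head x0 _ in H *.
have hm : h \in y :: s' by apply: smax_head_mem.
move/negbT: hnall; rewrite -has_predC => /hasP [z zs /= nz].
have pz := allP ps z zs; have ph := allP ps h hm.
have xz : le x z by have := tot px pz; rewrite (negbTE nz) orbF.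
exact: tr px pz ph xz (allP H z zs).
Qed.

Lemma all_le_head x0 x s : s != [::] -> P x -> all P s ->
  all (fun y => le y x) s = le (head x0 (smax s)) x.
Proof.
move=> ne px ps; have hm := smax_head_mem x0 ne; have H := smax_head x0 ne ps.
apply/idP/idP; first by move/allP; apply.
move=> hx; apply/allP => y ys.
exact: tr (allP ps y ys) (allP ps _ hm) px (allP H y ys) hx.
Qed.

Lemma smax_sorted s : all P s -> sorted (fun a b => le b a) (smax s).
Proof.
elim: s => [|x s IH] //= /andP [px ps]; case: ifP => hall; last exact: IH.
have := IH ps; case E: (smax s) => [|a l] //= ->; rewrite andbT.
apply: (allP hall); apply: smax_sub; rewrite E; exact: mem_head.
Qed.

Lemma lexs_behead t : all P t -> sorted (fun a b => le b a) t -> lexs le (behead t) t.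
Proof.
elim: t => [|a t IH] //= /andP [pa pt].
case: t IH pt => [|b t] //= IH /andP [pb pt'] /andP [ba st].
rewrite /plt /psim ba /=; case: (le a b) => //=.
by apply: IH; rewrite /= ?pb ?pt'.
Qed.

Lemma lexs_refl s : all P s -> lexs le s s.
Proof.
elim: s => [|a s IH] //= /andP [pa ps].
by rewrite /psim le_refl //= IH // orbT.
Qed.

Lemma lexs_trans s t u : all P s -> all P t -> all P u ->
  lexs le s t -> lexs le t u -> lexs le s u.
Proof.
elim: s t u => [|a s IH] [|b t] [|c u] //= /andP[pa ps] /andP[pb pt] /andP[pc pu].
rewrite /plt /psim.
case/orP => [/andP [ab nba]|/andP [/andP [ab ba] st]];
case/orP => [/andP [bc ncb]|/andP [/andP [bc cb] tu]];
rewrite (tr pa pb pc ab bc) /=.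
- by apply/orP; left; apply/negP => ca; rewrite (tr pb pc pa bc ca) in nba.
- by apply/orP; left; apply/negP => ca; rewrite (tr pb pc pa bc ca) in nba.
- by apply/orP; left; apply/negP => ca; rewrite (tr pc pa pb ca ab) in ncb.
- by rewrite (tr pc pb pa cb ba) /= (IH t u).
Qed.

Lemma lexs_total s t : all P s -> all P t -> lexs le s t || lexs le t s.
Proof.
elim: s t => [|a s IH] [|b t] //= /andP[pa ps] /andP[pb pt].
rewrite /plt /psim; have := tot pa pb.
case: (le a b); case: (le b a) => //= _.
exact: IH.
Qed.

Lemma lexs_smax_cons x s : P x -> all P s -> lexs le (smax s) (smax (x :: s)).
Proof.
move=> px ps; rewrite smax_cons; case: ifP => hall; last by apply: lexs_refl; apply: all_smax.
have sorted_s := smax_sorted ps.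
case E: (smax s) sorted_s => [|h l] //= so.
have hm : h \in s by apply: smax_sub; rewrite E mem_head.
have hx := allP hall h hm.
rewrite /plt /psim hx /=; case: (le x h) => //=.
have := lexs_behead (t := h :: l); apply => //.
by rewrite -E; apply: all_smax.
Qed.

Lemma lexs_subseqs s E : all P s -> E \in subseqs s -> lexs le E (smax s).
Proof.
elim: s E => [|x s IH] E /=; first by rewrite inE => _ /eqP ->.
move=> /andP [px ps]; rewrite mem_cat => /orP [/mapP [E' E's ->]|Es].
- case: ifP => hall.
    by rewrite /= /plt /psim le_refl //= IH.
  have ne : s != [::] by case: s {IH E's ps} hall.
  have := all_le_head x ne px ps; rewrite hall.
  have hm := smax_head_mem x ne.
  case Eh: (smax s) => [|h l] /=; first by move/eqP: Eh; rewrite smax_nil (negbTE ne).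
  rewrite Eh /= in hm => hx.
  have := tot px (allP ps h hm); rewrite /plt -hx orbF => ->.
  by [].
- have pE : all P E by apply/allP => y /(subseqs_sub Es) /(allP ps).
  rewrite -smax_cons; apply: (lexs_trans (t := smax s)) => //.
  + exact: all_smax.
  + by apply: all_smax; rewrite /= px.
  + exact: IH.
  + exact: lexs_smax_cons.
Qed.

Lemma lexmax_smax x0 S : all P S -> lexmax le x0 S (smax S).
Proof.
move=> pS; rewrite /lexmax smax_subseqs /=; apply/allP => E ES.
by rewrite lexleE; apply: lexs_subseqs.
Qed.

Lemma has_lexmax x0 S1 S2 : all P S1 -> all P S2 ->
  has (fun C => lexmax le x0 S1 C &&
     has (fun D => lexmax le x0 S2 D && lexle le x0 C D) (subseqs S2)) (subseqs S1)
  = lexs le (smax S1) (smax S2).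
Proof.
move=> p1 p2; apply/hasP/idP.
- move=> [C C1 /andP [/andP [_ CA] /hasP [D D2 /andP [_ CD]]]].
  have h1 : lexs le (smax S1) C.
    by have := allP CA _ (smax_subseqs S1); rewrite lexleE.
  have h2 := lexs_subseqs p2 D2.
  rewrite lexleE in CD.
  have pC : all P C by apply/allP => y /(subseqs_sub C1) /(allP p1).
  have pD : all P D by apply/allP => y /(subseqs_sub D2) /(allP p2).
  apply: (lexs_trans (t := C)) => //; try exact: all_smax.
  by apply: (lexs_trans (t := D)) => //; exact: all_smax.
- move=> H; exists (smax S1); first exact: smax_subseqs.
  rewrite lexmax_smax //=; apply/hasP; exists (smax S2); first exact: smax_subseqs.
  by rewrite lexmax_smax //= lexleE.
Qed.
End Gen.

Lemma blk_wb1 lo hi n W X : wb lo hi W -> all (fun x => n <= x) W ->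
  X \in blocks n W -> wb n.+1 hi X.
Proof.
move=> hw hn XW; apply: (blk_wb (A := W) (B := [::]) (lo := lo)); rewrite ?cats0 //.
by rewrite mem_cat XW.
Qed.

Lemma ord_lemma (P : pred word)
  (tot : forall a b, P a -> P b -> precsim a b || precsim b a)
  (tr : forall a b c, P a -> P b -> P c -> precsim a b -> precsim b c -> precsim a c)
  n X Y : all (fun x => n <= x) (X ++ Y) -> all P (blocks n X) -> all P (blocks n Y) ->
  precsim X Y = lexs precsim (smax precsim (blocks n X)) (smax precsim (blocks n Y)).
Proof.
move=> hn pX pY.
have [nin|nout] := boolP (n \in X ++ Y).
- have ne : X ++ Y != [::] by case: (X ++ Y) nin.
  have e : wmin (X ++ Y) = n.
    by apply/eqP; rewrite eqn_leq wmin_le //= (allP hn _ (wmin_mem ne)).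
  rewrite precsim_unfold // e; exact: (has_lexmax tot tr).
- rewrite mem_cat negb_or in nout; case/andP: nout => nX nY.
  rewrite !blocks_notin //= /plt /psim.
  by case: (precsim X Y); case: (precsim Y X).
Qed.

Lemma pre_k k : forall lo hi A B C, hi - lo <= k -> wb lo hi (A ++ B ++ C) ->
  (precsim A B || precsim B A) /\ (precsim A B -> precsim B C -> precsim A C).
Proof.
elim: k => [|k IH] lo hi A B C hk hw.
  have := wb_empty hk hw; clear hw hk.
  by case: A => [|a A] //; case: B => [|b B] //; case: C => [|c C].
have [E|NE] := eqVneq (A ++ B ++ C) [::].
  by move: E; clear hw; case: A => [|a A] //; case: B => [|b B] //; case: C => [|c C].
set n := wmin (A ++ B ++ C).
have nlo : lo <= n := wmin_ge NE hw.
have hn := all_wmin (A ++ B ++ C).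
pose P := wb lo.+1 hi.
have tot : forall a b, P a -> P b -> precsim a b || precsim b a.
  move=> a b pa pb; apply: (proj1 (IH lo.+1 hi a b a _ _)); first lia.
  by rewrite !wb_cat; move: pa pb; rewrite /P => -> ->.
have tr : forall a b c, P a -> P b -> P c -> precsim a b -> precsim b c -> precsim a c.
  move=> a b c pa pb pc; apply: (proj2 (IH lo.+1 hi a b c _ _)); first lia.
  by rewrite !wb_cat; move: pa pb pc; rewrite /P => -> -> ->.
have ordXY : forall X Y, {subset X ++ Y <= A ++ B ++ C} ->
    precsim X Y = lexs precsim (smax precsim (blocks n X)) (smax precsim (blocks n Y)).
  move=> X Y sXY; apply: (ord_lemma tot tr).
  - by apply/allP => x /sXY /(allP hn).
  - apply/allP => Z ZX; apply: (wb_weak (lo' := n.+1) (hi' := hi)) => //.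
    apply: (blk_wb1 (lo := lo) (W := X)) => //.
    + by apply: (wb_sub _ hw) => x xX; apply: sXY; rewrite mem_cat xX.
    + by apply/allP => x xX; apply: (allP hn); apply: sXY; rewrite mem_cat xX.
  - apply/allP => Z ZX; apply: (wb_weak (lo' := n.+1) (hi' := hi)) => //.
    apply: (blk_wb1 (lo := lo) (W := Y)) => //.
    + by apply: (wb_sub _ hw) => x xX; apply: sXY; rewrite mem_cat xX orbT.
    + by apply/allP => x xX; apply: (allP hn); apply: sXY; rewrite mem_cat xX orbT.
have sAB : {subset A ++ B <= A ++ B ++ C}.
  by move=> x; rewrite !mem_cat => /orP [] ->; rewrite ?orbT.
have sBA : {subset B ++ A <= A ++ B ++ C}.
  by move=> x; rewrite !mem_cat => /orP [] ->; rewrite ?orbT.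
have sBC : {subset B ++ C <= A ++ B ++ C}.
  by move=> x; rewrite !mem_cat => /orP [] ->; rewrite ?orbT.
have sAC : {subset A ++ C <= A ++ B ++ C}.
  by move=> x; rewrite !mem_cat => /orP [] ->; rewrite ?orbT.
have allPb : forall W, {subset W <= A ++ B ++ C} -> all P (smax precsim (blocks n W)).
  move=> W sW; apply: all_smax; apply/allP => Z ZW.
  apply: (wb_weak (lo' := n.+1) (hi' := hi)) => //.
  apply: (blk_wb1 (lo := lo) (W := W)) => //.
  + exact: (wb_sub sW hw).
  + by apply/allP => x /sW /(allP hn).
have sA : {subset A <= A ++ B ++ C} by move=> x; rewrite !mem_cat => ->.
have sB : {subset B <= A ++ B ++ C} by move=> x; rewrite !mem_cat => ->; rewrite orbT.
have sC : {subset C <= A ++ B ++ C} by move=> x; rewrite !mem_cat => ->; rewrite !orbT.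
split.
  rewrite (ordXY _ _ sAB) (ordXY _ _ sBA); apply: (lexs_total tot); exact: allPb.
rewrite (ordXY _ _ sAB) (ordXY _ _ sBC) (ordXY _ _ sAC).
move=> h1 h2; apply: (lexs_trans tr _ _ _ h1 h2); exact: allPb.
Qed.

Lemma wb_max A : wb 0 (wmax A).+1 A.
Proof. by apply/allP => x xA /=; rewrite ltnS wmax_ge. Qed.

Lemma precsim_total A B : precsim A B || precsim B A.
Proof. exact: (proj1 (pre_k (lo := 0) (C := A) (leqnn _) (wb_max _))). Qed.

Lemma precsim_trans A B C : precsim A B -> precsim B C -> precsim A C.
Proof. exact: (proj2 (pre_k (lo := 0) (leqnn _) (wb_max (A ++ B ++ C)))). Qed.

Lemma ordG n X Y : all (fun x => n <= x) (X ++ Y) ->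
  precsim X Y = lexs precsim (smax precsim (blocks n X)) (smax precsim (blocks n Y)).
Proof.
move=> hn; apply: (ord_lemma (P := predT)) => //; try exact: all_predT.
- by move=> a b _ _; apply: precsim_total.
- by move=> a b c _ _ _; apply: precsim_trans.
Qed.

Lemma split_first n (A : word) : n \in A ->
  exists A1 A2, A = A1 ++ n :: A2 /\ n \notin A1.
Proof.
elim: A => [|a A IH] //; rewrite inE; have [an|an] := eqVneq n a.
  by move=> _; exists [::], A; rewrite an.
move=> /= /IH [A1 [A2 [-> h]]]; exists (a :: A1), A2; split => //.
by rewrite inE negb_or an.
Qed.

Lemma all2_split (r : nat -> nat -> bool) s1 s2 t : all2 r (s1 ++ s2) t ->
  exists t1 t2, [/\ t = t1 ++ t2, all2 r s1 t1 & all2 r s2 t2].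
Proof.
elim: s1 t => [|a s1 IH] t /=; first by exists [::], t.
case: t => [|b t] //= /andP [ab /IH [t1 [t2 [-> h1 h2]]]].
by exists (b :: t1), t2; rewrite /= ab.
Qed.

Lemma all2_size (r : nat -> nat -> bool) s t : all2 r s t -> size s = size t.
Proof. by elim: s t => [|a s IH] [|b t] //= /andP [_ /IH ->]. Qed.

Lemma all2_wb n hi (u v : word) : all2 leq u v -> wb n.+1 hi u -> wb n hi v -> wb n.+1 hi v.
Proof.
elim: u v => [|a u IH] [|b v] //= /andP [ab uv] /andP [ha hu] /andP [hb hv].
rewrite (IH v) // andbT; move: ab ha hb; lia.
Qed.

Lemma wb_notin n hi (w : word) : wb n hi w -> n \notin w -> wb n.+1 hi w.
Proof.
elim: w => [|a w IH] //= /andP [ha hw]; rewrite inE negb_or => /andP [na nw].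
rewrite IH // andbT; move: ha na; rewrite eq_sym; move=> h /eqP; lia.
Qed.

Lemma last_def (s : word) x y : s != [::] -> last x s = last y s.
Proof. by case: s. Qed.

Lemma all2_from_nth (A B : word) : size A = size B ->
  (forall i, i < size A -> nth 0 A i <= nth 0 B i) -> all2 leq A B.
Proof.
elim: A B => [|a A IH] [|b B] //= [e] h.
rewrite (h 0 isT) /=; apply: IH => // i hi; exact: (h i.+1).
Qed.

Notation S := (smax precsim).
Notation L := (lexs precsim).

Lemma totG : forall a b : word, predT a -> predT b -> precsim a b || precsim b a.
Proof. by move=> a b _ _; apply: precsim_total. Qed.
Lemma trG : forall a b c : word, predT a -> predT b -> predT c ->
  precsim a b -> precsim b c -> precsim a c.
Proof. by move=> a b c _ _ _; apply: precsim_trans. Qed.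

Lemma LtransG s t u : L s t -> L t u -> L s u.
Proof. by apply: (lexs_trans trG); apply: all_predT. Qed.

Lemma LconsG x s : L (S s) (S (x :: s)).
Proof. by apply: (lexs_smax_cons totG) => //; apply: all_predT. Qed.

Lemma hd_max (s : seq word) : s != [::] ->
  exists h l, S s = h :: l /\ all (fun y => precsim y h) s.
Proof.
move=> ne; have := smax_head totG trG [::] ne (all_predT _).
case E: (S s) => [|h l]; last by move=> H; exists h, l.
by move/eqP: E; rewrite smax_nil (negbTE ne).
Qed.

Lemma plt_ge a x h : precsim a x -> ~~ precsim h x -> plt precsim a h.
Proof.
move=> ax nhx; have xh : precsim x h by have := precsim_total x h; rewrite (negbTE nhx) orbF.
rewrite /plt (precsim_trans ax xh) /=; apply/negP => ha.
by rewrite (precsim_trans ha ax) in nhx.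
Qed.

Lemma plt_gt a x h : prec a x -> precsim x h -> plt precsim a h.
Proof.
move=> /andP [ax nxa] xh; rewrite /plt (precsim_trans ax xh) /=; apply/negP => ha.
by rewrite (precsim_trans xh ha) in nxa.
Qed.

Lemma L_plt a h l m : plt precsim a h -> L (a :: m) (h :: l).
Proof. by move=> p; rewrite /= p. Qed.

Lemma L_plt_n a h l m : plt precsim a h -> ~~ L (h :: l) (a :: m).
Proof.
move=> /andP [ah nha] /=; rewrite /plt /psim; move: nha.
by case: (precsim h a).
Qed.

Inductive emb : seq word -> seq word -> Prop :=
| emb_nil Xs : emb [::] Xs
| emb_skip As x Xs : emb As Xs -> emb As (x :: Xs)
| emb_weak a As x Xs : precsim a x -> emb As Xs -> emb (a :: As) (x :: Xs)
| emb_strict a As x Xs : prec a x -> emb As (x :: Xs) -> emb (a :: As) (x :: Xs).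

Inductive embs : seq word -> seq word -> Prop :=
| embs_nil x Xs : embs [::] (x :: Xs)
| embs_skip As x Xs : embs As Xs -> embs As (x :: Xs)
| embs_weak a As x Xs : precsim a x -> embs As Xs -> embs (a :: As) (x :: Xs)
| embs_strict a As x Xs : prec a x -> embs As (x :: Xs) -> embs (a :: As) (x :: Xs).

Lemma emb_lexs As Xs : emb As Xs -> L (S As) (S Xs).
Proof.
elim => {As Xs} [Xs //|As x Xs _ IH|a As x Xs ax _ IH|a As x Xs ax _ IH].
- exact: LtransG IH (LconsG x Xs).
- rewrite !smax_cons; case hX: (all _ Xs); case hA: (all _ As).
  + rewrite /= /plt /psim ax /=; by case: (precsim x a).
  + by apply: LtransG IH _; have := LconsG x Xs; rewrite smax_cons hX.
  + have ne : Xs != [::] by case: Xs {IH} hX.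
    have [h [l [E H]]] := hd_max ne.
    have nhx : ~~ precsim h x.
      by have := all_le_head totG trG [::] (x := x) ne isT (all_predT _); rewrite hX E /= => <-.
    by rewrite E; apply: L_plt; apply: plt_ge ax nhx.
  + exact: IH.
- rewrite smax_cons; case: ifP => hA //.
  have [h [l [E H]]] := hd_max (s := x :: Xs) isT.
  rewrite E; apply: L_plt; apply: plt_gt ax _.
  by have := H; rewrite /= => /andP [].
Qed.

Lemma embs_lt As Xs : embs As Xs -> ~~ L (S Xs) (S As).
Proof.
elim => {As Xs} [x Xs|As x Xs _ IH|a As x Xs ax _ IH|a As x Xs ax _ IH].
- by have [h [l [E _]]] := hd_max (s := x :: Xs) isT; rewrite E.
- by apply: contra IH => H; apply: LtransG (LconsG x Xs) H.
- rewrite !smax_cons; case hX: (all _ Xs); case hA: (all _ As).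
  + rewrite /= /plt /psim ax /= andbF andbT /=; by case: (precsim x a).
  + by apply: contra IH => H; apply: LtransG _ H; have := LconsG x Xs; rewrite smax_cons hX.
  + have ne : Xs != [::] by case: Xs {IH} hX.
    have [h [l [E H]]] := hd_max ne.
    have nhx : ~~ precsim h x.
      by have := all_le_head totG trG [::] (x := x) ne isT (all_predT _); rewrite hX E /= => <-.
    by rewrite E; apply: L_plt_n; apply: plt_ge ax nhx.
  + exact: IH.
- rewrite [S (a :: As)]smax_cons; case: ifP => hA //.
  have [h [l [E H]]] := hd_max (s := x :: Xs) isT.
  rewrite E; apply: L_plt_n; apply: plt_gt ax _.
  by have := H; rewrite /= => /andP [].
Qed.

Lemma emb_skips Ds As Xs : emb As Xs -> emb As (Ds ++ Xs).
Proof. by elim: Ds => [|d Ds IH] //= h; apply: emb_skip; apply: IH. Qed.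

Lemma embs_skips Ds As Xs : embs As Xs -> embs As (Ds ++ Xs).
Proof. by elim: Ds => [|d Ds IH] //= h; apply: embs_skip; apply: IH. Qed.

Definition stmt (A B C D : word) :=
  precsim A (D ++ B ++ C) /\
  ((C != [::] \/ last 0 A != last 0 B) -> ~~ precsim (D ++ B ++ C) A).

Lemma wb_hn lo hi n (w : word) : wb lo hi w -> all (fun x => n <= x) w -> wb n hi w.
Proof.
elim: w => [|a w IH] //= /andP [ha hw] /andP [na nw]; rewrite IH // andbT.
by move: ha na; lia.
Qed.

Lemma wb_nin n hi (w : word) : wb n.+1 hi w -> n \notin w.
Proof.
elim: w => [|a w IH] //= /andP [ha hw]; rewrite inE negb_or IH // andbT.
by move: ha; case: eqP => // ->; lia.
Qed.

Lemma head_blocks n W : head [::] (blocks n W) \in blocks n W.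
Proof. by case: (blocks n W) (blocks_ne n W) => // b bs _; apply: mem_head. Qed.

Lemma M k : forall lo hi A B C D, hi - lo <= k -> wb lo hi (A ++ D ++ B ++ C) ->
  all2 leq A B -> stmt A B C D.
Proof.
elim: k => [|k IH] lo hi A B C D hk hw h2.
  have := wb_empty hk hw; clear hw hk h2.
  case: A => [|a A] //; case: D => [|d D] //; case: B => [|b B] //; case: C => [|c C] // _.
  by split => // -[].
have [E|NE] := eqVneq (A ++ D ++ B ++ C) [::].
  move: E; clear hw h2.
  case: A => [|a A] //; case: D => [|d D] //; case: B => [|b B] //; case: C => [|c C] // _.
  by split => // -[].
set n := wmin (A ++ D ++ B ++ C).
have nlo : lo <= n := wmin_ge NE hw.
have hn : all (fun x => n <= x) (A ++ D ++ B ++ C) := all_wmin _.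
clearbody n.
have IHg : forall A' B' C' D', wb n.+1 hi A' -> wb n.+1 hi B' -> wb n.+1 hi C' ->
    wb n.+1 hi D' -> all2 leq A' B' -> stmt A' B' C' D'.
  move=> A' B' C' D' a b c d h; apply: (IH lo.+1 hi) => //; first lia.
  by rewrite !wb_cat; apply/and4P; split; apply: (wb_weak (lo' := n.+1) (hi' := hi)).
have Sl : forall m A' B' C' dl, size A' < m -> wb n hi (A' ++ B' ++ C') -> wb n.+1 hi dl ->
   all2 leq A' B' ->
   emb (blocks n A') (blocks n (dl ++ B' ++ C')) /\
   ((C' != [::] \/ last n A' != last n B') ->
      embs (blocks n A') (blocks n (dl ++ B' ++ C'))).
  elim=> [|m IHm] // A' B' C' dl szA hw' hdl h2'.
  move: (hw'); rewrite !wb_cat => /and3P [wA wB wC].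
  have [nin|nout] := boolP (n \in A').
  - have [A1 [A2 [eA nA1]]] := split_first nin.
    rewrite eA in h2'; have [B1 [B2' [eB h21 h22]]] := all2_split h2'.
    case: B2' eB h22 => [|b B2] //= eB /andP [nb h22].
    have wA1 : wb n.+1 hi A1.
      by apply: wb_notin => //; apply: (wb_sub _ wA) => x xa; rewrite eA mem_cat xa.
    have wB1 : wb n.+1 hi B1.
      by apply: (all2_wb h21 wA1); apply: (wb_sub _ wB) => x xb; rewrite eB mem_cat xb.
    have wA2 : wb n hi A2.
      by apply: (wb_sub _ wA) => x xa; rewrite eA mem_cat inE xa !orbT.
    have wB2 : wb n hi B2.
      by apply: (wb_sub _ wB) => x xa; rewrite eB mem_cat inE xa !orbT.
    have wbb : b < hi.
      by have := allP wB b; rewrite eB mem_cat mem_head orbT => /(_ isT) /andP [].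
    have szA2 : size A2 < m.
      move: szA; rewrite eA size_cat /= addnS ltnS; apply: leq_ltn_trans; exact: leq_addl.
    have wABC2 : wb n hi (A2 ++ B2 ++ C') by rewrite !wb_cat wA2 wB2 wC.
    rewrite eA blocks_sep // eB last_cat /= last_cat /=.
    have [bn|bn] := eqVneq b n.
    + rewrite bn.
      have -> : dl ++ (B1 ++ n :: B2) ++ C' = (dl ++ B1) ++ n :: (B2 ++ C') by rewrite -!catA.
      rewrite blocks_sep; last by apply: (wb_nin (hi := hi)); rewrite wb_cat hdl wB1.
      have [IH1 IH2] := IHm A2 B2 C' [::] szA2 wABC2 isT h22.
      have [p1 _] := IHg A1 B1 [::] dl wA1 wB1 isT hdl h21.
      rewrite cats0 in p1.
      split; first exact: emb_weak p1 IH1.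
      by move=> hc; apply: embs_weak p1 (IH2 hc).
    + have nb' : n < b by rewrite ltn_neqAle eq_sym bn nb.
      set dl' := dl ++ B1 ++ [:: b].
      have wdl' : wb n.+1 hi dl' by rewrite /dl' !wb_cat hdl wB1 /= nb' wbb.
      have -> : dl ++ (B1 ++ b :: B2) ++ C' = dl' ++ B2 ++ C' by rewrite /dl' -!catA.
      have [IH1 IH2] := IHm A2 B2 C' dl' szA2 wABC2 wdl' h22.
      rewrite blocks_pre in IH1 IH2 *; try exact: (wb_nin wdl').
      have wBC2 : wb n hi (B2 ++ C') by rewrite wb_cat wB2 wC.
      have wc' : wb n.+1 hi (head [::] (blocks n (B2 ++ C'))).
        apply: (blk_wb1 (lo := n) (W := B2 ++ C')) => //; last exact: head_blocks.
        by apply: sub_all wBC2 => x /andP [].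
      case EC: (blocks n (B2 ++ C')) (blocks_ne n (B2 ++ C')) wc' IH1 IH2 => [|c' cs] //= _ wc' IH1 IH2.
      have pr : prec A1 (dl' ++ c').
        have wbc : wb n.+1 hi (b :: c') by rewrite /= nb' wbb wc'.
        have [p1 p2] := IHg A1 B1 (b :: c') dl wA1 wB1 wbc hdl h21.
        have -> : dl' ++ c' = dl ++ B1 ++ b :: c' by rewrite /dl' -!catA.
        by rewrite /prec p1 (p2 (or_introl isT)).
      split; first exact: emb_strict pr IH1.
      move=> hc.
      have [A2nil|A2ne] := eqVneq A2 [::].
      * rewrite A2nil /=; apply: embs_strict pr _; apply: embs_strict (embs_nil _ _).
        have xne : dl' ++ c' != [::].
          apply/eqP => e; have : b \in dl' ++ c' by rewrite /dl' !mem_cat mem_head !orbT.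
          by rewrite e.
        have wx : wb n.+1 hi (dl' ++ c') by rewrite wb_cat wdl' wc'.
        have [p1 p2] := IHg [::] [::] (dl' ++ c') [::] isT isT wx isT isT.
        by rewrite /prec p1 p2 //; left.
      * have B2ne : B2 != [::] by move: A2ne; rewrite -!size_eq0 (all2_size h22).
        apply: embs_strict pr (IH2 _).
        by rewrite (last_def b n B2ne) in hc.
  - have wA' : wb n.+1 hi A' := wb_notin wA nout.
    have wB' : wb n.+1 hi B' := all2_wb h2' wA' wB.
    rewrite blocks_notin // catA blocks_pre; last by apply: (wb_nin (hi := hi)); rewrite wb_cat hdl wB'.
    have wc1 : wb n.+1 hi (head [::] (blocks n C')).
      apply: (blk_wb1 (lo := n) (W := C')) => //; last exact: head_blocks.
      by apply: sub_all wC => x /andP [].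
    case EC: (blocks n C') (blocks_ne n C') wc1 => [|c1 cs] //= _ wc1.
    have [p1 p2] := IHg A' B' c1 dl wA' wB' wc1 hdl h2'.
    rewrite -catA.
    split; first exact: emb_weak p1 (emb_nil _).
    move=> hc.
    have [c1n|c1n] := eqVneq c1 [::].
    * have [Cn|Cn] := eqVneq C' [::].
      + apply: embs_strict (embs_nil _ _); rewrite /prec p1 p2 //; right.
        case: hc; first by rewrite Cn.
        move=> hl.
        have Ane : A' != [::].
          apply/eqP => eA0; move: hl; rewrite eA0.
          have -> : B' = [::] by apply/eqP; rewrite -size_eq0 -(all2_size h2') eA0.
          by rewrite eqxx.
        have Bne : B' != [::] by move: Ane; rewrite -!size_eq0 (all2_size h2').
        by rewrite (last_def 0 n Ane) (last_def 0 n Bne).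
      + apply: embs_weak p1 _; case: cs EC => [|y ys] EC; last exact: embs_nil.
        by rewrite c1n in EC; move/blocks_nil1: EC => ECn; rewrite ECn in Cn.
    * by apply: embs_strict (embs_nil _ _); rewrite /prec p1 p2 //; left.
have [Ds [dl [eD ndl eX]]] := bl_cat n D (B ++ C).
have wdl : wb n.+1 hi dl.
  apply: (blk_wb1 (lo := lo) (W := D)).
  - by apply: (wb_sub _ hw) => x xd; rewrite !mem_cat xd orbT.
  - by apply/allP => x xd; apply: (allP hn); rewrite !mem_cat xd orbT.
  - by rewrite eD mem_rcons mem_head.
have wABC : wb n hi (A ++ B ++ C).
  apply: (wb_hn (lo := lo)).
  - by apply: (wb_sub _ hw) => x; rewrite !mem_cat => /orP [->|/orP [->|->]]; rewrite ?orbT.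
  - by apply/allP => x xd; apply: (allP hn); move: xd; rewrite !mem_cat => /orP [->|/orP [->|->]]; rewrite ?orbT.
have [e1 e2] := Sl (size A).+1 A B C dl (ltnSn _) wABC wdl h2.
have hXA : all (fun x => n <= x) ((D ++ B ++ C) ++ A).
  by apply/allP => x xd; apply: (allP hn); move: xd; rewrite !mem_cat => /orP [/orP [->|/orP [->|->]]|->]; rewrite ?orbT.
rewrite /stmt (ordG hn) (ordG hXA) eX.
split; first by apply: emb_lexs; apply: emb_skips.
move=> hc; apply: embs_lt; apply: embs_skips; apply: e2.
case: hc => [->|hl]; [by left | right].
have Ane : A != [::].
  apply/eqP => eA0; move: hl; rewrite eA0.
  have -> : B = [::] by apply/eqP; rewrite -size_eq0 -(all2_size h2) eA0.
  by rewrite eqxx.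
have Bne : B != [::] by move: Ane; rewrite -!size_eq0 (all2_size h2).
by rewrite (last_def n 0 Ane) (last_def n 0 Bne).
Qed.

Unset Implicit Arguments.

Theorem lemma4 (A B C D : word) :
  size A = size B ->
  (forall i, i < size A -> nth 0 A i <= nth 0 B i) ->
  precsim A (D ++ B ++ C) /\
  ((C != [::] \/ last 0 A != last 0 B) -> prec A (D ++ B ++ C)).
Proof.
move=> hs hnth; have h2 := all2_from_nth hs hnth.
have [p1 p2] := M (lo := 0) (leqnn _) (wb_max (A ++ D ++ B ++ C)) h2.
by split => // hc; rewrite /prec p1 p2.
Qed.
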